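(* Let $A$ be a set of factorizations on an alphabet $S$ and let $w$ be a weight on $A$. Let $\Phi$ be the linear operator with $\Phi(t^n)=n!$ for $n\ge 0$ which fixes all other variables (extended coefficientwise to power series in the other variables). Then \[ \Phi\big(f_{A,w}(t)\big) = \sum_{W} w(W), \] whenever both sides are defined, where the sum on the right runs over all elements $W\in A$ having at most one part (i.e., words, including the empty factorization).
   Context: A word on an alphabet $S$ is a finite sequence of letters of $S$; a subword is a consecutive block of letters. A factorization on $S$ is an ordered list $(\phi_1)(\phi_2)\cdots(\phi_k)$ of nonempty words on $S$, its parts; $\mathrm{parts}(\phi)=k$ is the number of parts. A word $W$ is identified with the one-part factorization $(W)$, and the empty word with the factorization with no parts, written $\emptyset$. For $T\subseteq S$, the restriction $\phi|_T$ is the factorization whose parts are the maximal subwords of the parts of $\phi$ that use only letters of $T$, ordered by their occurrence in $\phi$ (it is $\emptyset$ if $\phi$ uses no letter of $T$). A weight on a set $A$ of factorizations on $S$ is a function $w$ from $A$ together with all restrictions of elements of $A$ into a polynomial ring $\mathbb{R}[x_1,x_2,\ldots]$ such that $w(\phi)=w(\phi|_T)\,w(\phi|_{S\setminus T})$ for all $\phi\in A$ and $T\subseteq S$. The polynomials $l_k(t)$ are defined by $\sum_{k\ge0}l_k(t)x^k=e^{tx/(1+x)}$ (so $l_0=1$, $l_1=t$; $l_k(t)=(-1)^kL_k^{(-1)}(t)$ with $L_k^{(\alpha)}$ the generalized Laguerre polynomials). The Laguerre series of $A$ with respect to $w$ is the formal power series $f_{A,w}(t)=\sum_{\phi\in A}w(\phi)\,l_{\mathrm{parts}(\phi)}(t)$,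 when this sum is well-defined as a formal power series. *)

(* Defs.v *)
(* Polynomial ring R[x_0,x_1,...] in countably many variables
   is modelled by the monoid algebra {malg R[{cmonom nat}]} of multinomials. *)
From HB Require Import structures.
From mathcomp Require Import all_boot all_order all_algebra.
From mathcomp Require Import finmap.
From mathcomp.multinomials Require Import monalg.
From mathcomp Require Import reals.
Set Implicit Arguments. Unset Strict Implicit. Unset Printing Implicit Defensive.
Import Order.TTheory GRing.Theory Num.Theory.
Local Open Scope ring_scope.

Definition monom := {cmonom nat}.
Definition xpoly (R : realType) := {malg R[monom]}.

Section Factorizations.
Variable S : eqType.

Definition is_factorization (phi : seq (seq S)) : bool :=
  all (fun p => p != [::]) phi.

Definition parts (phi : seq (seq S)) : nat := size phi.

(** Maximal subwords of a word [p] using only letters of [T], in order;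
    [cur] is the run currently being built. *)
Fixpoint runs_aux (T : pred S) (cur : seq S) (p : seq S) : seq (seq S) :=
  match p with
  | [::] => if cur is [::] then [::] else [:: cur]
  | x :: p' =>
      if T x then runs_aux T (rcons cur x) p'
      else (if cur is [::] then [::] else [:: cur]) ++ runs_aux T [::] p'
  end.

Definition restrict (T : pred S) (phi : seq (seq S)) : seq (seq S) :=
  flatten (map (runs_aux T [::]) phi).

End Factorizations.

(** Well-defined (finitely supported) sum of a family over a possibly
    infinite index set [P]: [c] is the sum of [F] over [P], all but finitely
    many terms being zero. *)
Definition has_fsum (R : realType) (I : eqType) (P : I -> Prop) (F : I -> R)
    (c : R) : Prop :=
  exists s : seq I,
    [/\ uniq s, (forall i, i \in s -> P i),
        (forall i, P i -> F i != 0 -> i \in s) & c = \sum_(i <- s) F i].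

(** Laguerre polynomials l_k(t) defined by sum_k l_k(t) x^k = e^{tx/(1+x)}
    = sum_j t^j/j! (x/(1+x))^j.  The coefficient of t^j x^k is
    [x^k] (x/(1+x))^j / j!, and x/(1+x) = x * sum_{i<=k} (-x)^i mod x^(k+1). *)
Definition lag_coef (R : realType) (k j : nat) : R :=
  ((('X * \sum_(i < k.+1) (- 'X) ^+ i) ^+ j : {poly R})`_k) / (j`!)%:R.

Definition laguerre (R : realType) (k : nat) : {poly R} :=
  \poly_(j < k.+1) lag_coef R k j.

(* Main.v *)
Require Import Defs.
From HB Require Import structures.
From mathcomp Require Import all_boot all_order all_algebra.
From mathcomp Require Import finmap.
From mathcomp.multinomials Require Import monalg.
From mathcomp Require Import reals.
From mathcomp Require Import ring.
Import Order.TTheory GRing.Theory Num.Theory.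
Local Open Scope ring_scope.

Lemma tele (R : comNzRingType) (x : R) n : (1 - x) * \sum_(i < n) x ^+ i = 1 - x ^+ n.
Proof.
elim: n => [|n IH]; first by rewrite big_ord0 mulr0 expr0 subrr.
by rewrite big_ord_recr /= mulrDr IH exprS; ring.
Qed.

Lemma keyalg {R : comNzRingType} {k : nat} {g T : {poly R}} :
  (1 + 'X) * g = 1 - (-1) ^+ k.+1 * 'X ^+ k.+1 ->
  (1 - 'X * g) * T = 1 - g ^+ k.+1 * 'X ^+ k.+1 ->
  T + ((-1) ^+ k.+1 * T) * 'X ^+ k.+2 =
   (1 + 'X) - ((1 + 'X) * g ^+ k.+1) * 'X ^+ k.+1.
Proof.
move=> hg hT.
have -> : (1 + 'X) - ((1 + 'X) * g ^+ k.+1) * 'X ^+ k.+1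
     = (1 + 'X) * (1 - g ^+ k.+1 * 'X ^+ k.+1).
 by ring.
rewrite -hT.
have -> : T + ((-1) ^+ k.+1 * T) * 'X ^+ k.+2 =
  ((1 + 'X) - 'X * (1 - (-1) ^+ k.+1 * 'X ^+ k.+1)) * T by rewrite (exprS _ k.+1); ring.

rewrite -hg; ring.
Qed.

Lemma key (R : comNzRingType) (k : nat) :
  (\sum_(j < k.+1) (('X * \sum_(i < k.+1) (- 'X) ^+ i) ^+ j : {poly R}))`_k
  = (k <= 1)%N%:R.
Proof.
have hg : (1 + 'X) * (\sum_(i < k.+1) (- 'X) ^+ i : {poly R}) = 1 - (-1) ^+ k.+1 * 'X ^+ k.+1.
  by rewrite -exprMn mulN1r -tele opprK.
set g := \sum_(i < k.+1) (- 'X) ^+ i in hg *.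
have hT : (1 - 'X * g) * (\sum_(j < k.+1) ('X * g) ^+ j) = 1 - g ^+ k.+1 * 'X ^+ k.+1.
  by rewrite tele exprMn mulrC.
have E := keyalg hg hT.
have := congr1 (fun p : {poly R} => p`_k) E => /=.
rewrite !coefD !coefMXn coefN coefMXn ltnS leqnSn ltnSn addr0 oppr0 addr0 => ->.
rewrite coef1 coefX; clear -k; case: k => [|[|k]] /=; rewrite ?addr0 ?add0r //.
Qed.

Lemma fsum_eq {R : realType} {I : eqType} {P : I -> Prop} {F : I -> R} {c s} :
  has_fsum P F c -> uniq s -> (forall i, i \in s -> P i) ->
  (forall i, P i -> F i != 0 -> i \in s) -> c = \sum_(i <- s) F i.
Proof.
move=> [t [ut tP tS ->]] us sP sS.
rewrite (bigID (fun i => F i != 0)) /= [X in _ + X]big1; last by move=> i /negPn/eqP.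
rewrite addr0 [RHS](bigID (fun i => F i != 0)) /= [X in _ + X]big1; last by move=> i /negPn/eqP.
rewrite addr0 -!(big_filter _ (fun i => F i != 0)).
apply: perm_big.
apply: uniq_perm; rewrite ?filter_uniq //.
move=> i; rewrite !mem_filter; apply/andP/andP => -[Fi Hi]; split => //.
  by apply: sS => //; apply: tP.
by apply: tS => //; apply: sP.
Qed.

Lemma lag0 (R : realType) : (laguerre R 0)`_0 = 1.
Proof. by rewrite coef_poly /= /lag_coef expr0 coef1 /= invr1 mulr1. Qed.

Lemma lag1 (R : realType) k : (laguerre R k.+1)`_1 = (-1) ^+ k.
Proof.
rewrite coef_poly /= /lag_coef expr1 coefXM /= invr1 mulr1.
have -> : (\sum_(i < k.+2) (- 'X) ^+ i : {poly R}) =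
    \sum_(i < k.+2) ((-1) ^+ i) *: 'X^(nat_of_ord i).
  by apply: eq_bigr => i _; rewrite -scaleN1r exprZn.
rewrite coef_sumMXn (big_pred1 (inord k)) ?inordK //.
by move=> i /=; rewrite -(inj_eq val_inj) /= inordK.
Qed.

Lemma phi_lag (R : realType) k M : (k < M)%N ->
  \sum_(j < M) (j`!)%:R * (laguerre R k)`_j = (k <= 1)%:R.
Proof.
move=> hk; rewrite -(key R k) coef_sum (big_ord_widen _ (fun j => (('X * \sum_(i < k.+1) (- 'X) ^+ i) ^+ j : {poly R})`_k) hk) [RHS]big_mkcond.
apply: eq_bigr => j _; rewrite coef_poly; case: ifP => h; last by rewrite mulr0.
by rewrite /lag_coef mulrC divfK // pnatr_eq0 -lt0n fact_gt0.
Qed.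

Theorem proposition2p6 (R : realType) (S : eqType)
    (A : seq (seq S) -> Prop) (w : seq (seq S) -> xpoly R) :
  (* A is a set of factorizations on S *)
  (forall phi, A phi -> is_factorization phi) ->
  (* w is a weight on A *)
  (forall phi, A phi -> forall T : pred S,
      w phi = w (restrict T phi) * w (restrict (predC T) phi)) ->
  (* F m j = coefficient of x^m t^j in the Laguerre series f_{A,w}(t),
     which is assumed well-defined as a formal power series *)
  forall F : monom -> nat -> R,
  (forall m j, has_fsum A (fun phi => (w phi)@_m * (laguerre R (parts phi))`_j)
                        (F m j)) ->
  forall (m : monom) (N : nat) (r : R),
  (* the x^m-coefficient of f_{A,w} is a polynomial in t (so Phi applies) *)
  (forall j, (N <= j)%N -> F m j = 0) ->
  (* r = x^m-coefficient of sum of w(W) over W in A with at most one part *)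
  has_fsum (fun phi => A phi /\ (parts phi <= 1)%N) (fun phi => (w phi)@_m) r ->
  (* x^m-coefficient of Phi(f_{A,w}(t)) *)
  \sum_(j < N) (j`!)%:R * F m j = r.
Proof.
move=> _ _ F hF m N r hN hr.
have [s0 [u0 A0 S0 _]] := hF m 0%N.
have [s1 [u1 A1 S1 _]] := hF m 1%N.
pose P := undup [seq phi <- s0 ++ s1 | (w phi)@_m != 0].
have PA : forall phi, phi \in P -> A phi.
  move=> phi; rewrite mem_undup mem_filter mem_cat => /andP[_ /orP[]]; [exact: A0|exact: A1].
have PS : forall phi, A phi -> (w phi)@_m != 0 -> phi \in P.
  move=> phi Aphi wn; rewrite mem_undup mem_filter wn mem_cat /=.
  case Hp: (parts phi) => [|k].
  - by rewrite S0 // Hp lag0 mulr1.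
  - by rewrite S1 ?orbT // Hp lag1 mulf_neq0 // signr_eq0.
have uP : uniq P by exact: undup_uniq.
have hFj : forall j, F m j = \sum_(phi <- P) (w phi)@_m * (laguerre R (parts phi))`_j.
  move=> j; apply: (fsum_eq (hF m j) uP PA) => phi Aphi Gn; apply: PS => //.
  by apply: contraNneq Gn => ->; rewrite mul0r.
have hr' : r = \sum_(phi <- P | (parts phi <= 1)%N) (w phi)@_m.
  rewrite -big_filter; apply: (fsum_eq hr).
  - exact: filter_uniq.
  - by move=> phi; rewrite mem_filter => /andP[h1 h2]; split; [exact: PA|exact: h1].
  - by move=> phi [Aphi h1] wn; rewrite mem_filter h1; exact: PS.
pose M := maxn N (\max_(phi <- P) parts phi).+1.
have hNM : (N <= M)%N by rewrite leq_maxl.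
rewrite (big_ord_widen _ (fun j => (j`!)%:R * F m j) hNM).
have -> : \sum_(i < M | (i < N)%N) (i`!)%:R * F m i = \sum_(i < M) (i`!)%:R * F m i.
  rewrite [RHS](bigID (fun i : 'I_M => (i < N)%N)) /= [X in _ = _ + X]big1 ?addr0 //.
  by move=> j; rewrite -leqNgt => h; rewrite hN // mulr0.
under eq_bigr do rewrite hFj mulr_sumr.
rewrite exchange_big /= hr' [RHS]big_mkcond /=; apply: eq_big_seq => phi Pphi.
transitivity ((w phi)@_m * \sum_(j < M) (j`!)%:R * (laguerre R (parts phi))`_j).
  by rewrite mulr_sumr; apply: eq_bigr => j _; rewrite mulrCA.
rewrite phi_lag; first by case: ifP => _; rewrite ?mulr1 ?mulr0.
rewrite /M leq_max; apply/orP; right; rewrite ltnS.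
exact: (leq_bigmax_seq _ Pphi).
Qed.
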